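(* The rectangle locus for two pairs of lines in the plane is a hyperbola if and only if neither pair consists of parallel lines, at most one pair consists of orthogonal lines, and the pairs are not translations of each other.
   Context: A pair of lines means two distinct lines; two pairs of lines are distinct pairs, possibly sharing one line. The rectangle locus of two pairs $L_1,L_3$ and $L_2,L_4$ is the set of points $p$ in the plane that are the midpoint both of a segment joining $L_1$ and $L_3$ and of a segment joining $L_2$ and $L_4$, these two segments having equal length (equivalently, centers of possibly degenerate rectangles whose diagonals join the lines of the respective pairs). Here a hyperbola means a set $\{{\bf x}\in\mathbb{R}^2:({\bf x}-{\bf p})^TC({\bf x}-{\bf p})=k\}$ with $C$ a real symmetric $2\times2$ matrix with $\det C<0$, ${\bf p}\in\mathbb{R}^2$, $k\in\mathbb{R}$; the case $k=0$ (a pair of crossing lines) is a degenerate hyperbola and is allowed. One pair is a translation of the other if it is its image under a translation of the plane. *)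

(* Defs.v *)
From HB Require Import structures.
From mathcomp Require Import all_boot all_order all_algebra.
From mathcomp Require Import reals.
Set Implicit Arguments. Unset Strict Implicit. Unset Printing Implicit Defensive.
Import Order.TTheory GRing.Theory Num.Theory.
Local Open Scope ring_scope.

Section Defs.
Variable R : realType.

Definition point := (R * R)%type.

Definition padd (x y : point) : point := (x.1 + y.1, x.2 + y.2).
Definition psub (x y : point) : point := (x.1 - y.1, x.2 - y.2).

(* The line through p with direction vector d (d <> 0 assumed where used). *)
Definition line (p d : point) : point -> Prop :=
  fun x => exists t : R, x = (p.1 + t * d.1, p.2 + t * d.2).

Definition nonzero_vec (d : point) : Prop := d.1 != 0 \/ d.2 != 0.

Definition same_set (L M : point -> Prop) : Prop := forall x, L x <-> M x.

Definition parallel_dir (d e : point) : Prop := d.1 * e.2 - d.2 * e.1 = 0.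
Definition orthogonal_dir (d e : point) : Prop := d.1 * e.1 + d.2 * e.2 = 0.

Definition translate (v : point) (L : point -> Prop) : point -> Prop :=
  fun x => L (psub x v).

Definition pair_translate (L1 L3 L2 L4 : point -> Prop) : Prop :=
  exists v : point,
    (same_set (translate v L1) L2 /\ same_set (translate v L3) L4) \/
    (same_set (translate v L1) L4 /\ same_set (translate v L3) L2).

Definition same_pair (L1 L3 L2 L4 : point -> Prop) : Prop :=
  (same_set L1 L2 /\ same_set L3 L4) \/ (same_set L1 L4 /\ same_set L3 L2).

Definition midpoint (a c : point) : point := ((a.1 + c.1) / 2, (a.2 + c.2) / 2).

Definition sqdist (a c : point) : R := (a.1 - c.1) ^+ 2 + (a.2 - c.2) ^+ 2.

Definition rect_locus (L1 L3 L2 L4 : point -> Prop) : point -> Prop :=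
  fun m => exists a c b d : point,
    [/\ L1 a, L3 c, L2 b & L4 d] /\
    [/\ m = midpoint a c, m = midpoint b d & sqdist a c = sqdist b d].

Definition qform (C : 'M[R]_2) (u : point) : R :=
  u.1 * (C 0 0 * u.1 + C 0 1 * u.2) + u.2 * (C 1 0 * u.1 + C 1 1 * u.2).

(* Hyperbola (possibly degenerate, k = 0 allowed). *)
Definition hyperbola (S : point -> Prop) : Prop :=
  exists (C : 'M[R]_2) (p : point) (k : R),
    [/\ C^T = C, \det C < 0 &
        forall x, S x <-> qform C (psub x p) = k].

End Defs.

(* Main.v *)
Require Import Defs.
From HB Require Import structures.
From mathcomp Require Import all_boot all_order all_algebra.
From mathcomp Require Import reals ring lra.
Import Order.TTheory GRing.Theory Num.Theory.
Local Open Scope ring_scope.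

Definition Qf {R : realType} (a b e : R) (u : point R) : R :=
  a * u.1 ^+ 2 + 2 * b * u.1 * u.2 + e * u.2 ^+ 2.

Lemma diag_form {R : realType} (a b e : R) : a * e - b * b < 0 ->
  exists t11 t12 t21 t22 l : R, [/\ l != 0, t11 * t22 - t12 * t21 != 0 &
   forall U V, Qf a b e (t11 * U + t12 * V, t21 * U + t22 * V) = l * U * V].
Proof.
move=> hd.
have hD : 0 < b * b - a * e by lra.
set r := Num.sqrt (b * b - a * e).
have hr : 0 < r by rewrite sqrtr_gt0.
have hr2 : r ^+ 2 = b * b - a * e by rewrite sqr_sqrtr // ltW.
have rn0 : r != 0 by rewrite gt_eqF.
have [a0|an0] := eqVneq a 0.
  have [e0|en0] := eqVneq e 0.
    have bn0 : b != 0 by apply/eqP => b0; move: hd; rewrite a0 e0 b0; lra.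
    exists 1, 0, 0, 1, (2 * b); split.
    - by rewrite mulf_neq0 // pnatr_eq0.
    - rewrite mulr1 mulr0 subr0; exact: oner_neq0.
    - move=> U V; rewrite /Qf a0 e0 /=; ring.
  exists (1 / (2 * r)), (- (1 / (2 * r))), (1 / (2 * e) - b / (2 * r * e)),
     (1 / (2 * e) + b / (2 * r * e)), (1 / e); split.
  - by rewrite div1r invr_eq0.
  - have -> : 1 / (2 * r) * (1 / (2 * e) + b / (2 * r * e)) -
       - (1 / (2 * r)) * (1 / (2 * e) - b / (2 * r * e)) = 1 / (2 * r * e).
      by field; rewrite rn0 en0.
    by rewrite div1r invr_eq0 !mulf_neq0 // pnatr_eq0.
  - move=> U V; rewrite /Qf /=.
    rewrite a0 mul0r subr0 in hr2; rewrite a0.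
    have h0 : r ^+ 2 - b * b = 0 by rewrite hr2 subrr.
    apply: (@eq_trans _ _ (1 / e * U * V + (r ^+ 2 - b * b) * ((U - V) ^+ 2 / (4 * r ^+ 2 * e)))); last by rewrite h0 mul0r addr0.
    field; rewrite rn0 en0 //.
  exists ((1 / (2 * a)) - b / (2 * r * a)), (1 / (2 * a) + b / (2 * r * a)), (1 / (2 * r)), (- (1 / (2 * r))), (1 / a); split.
  - by rewrite div1r invr_eq0.
  - have -> : (1 / (2 * a) - b / (2 * r * a)) * - (1 / (2 * r)) - (1 / (2 * a) + b / (2 * r * a)) * (1 / (2 * r)) = - (1 / (2 * r * a)).
      by field; rewrite rn0 an0.
    by rewrite oppr_eq0 div1r invr_eq0 !mulf_neq0 // pnatr_eq0.
  - move=> U V; rewrite /Qf /=.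
    have h0 : r ^+ 2 - (b * b - a * e) = 0 by rewrite hr2 subrr.
    apply: (@eq_trans _ _ (1 / a * U * V + (r ^+ 2 - (b * b - a * e)) * ((U - V) ^+ 2 / (4 * r ^+ 2 * a)))); last by rewrite h0 mul0r addr0.
    field; rewrite rn0 an0 //.
Qed.


Definition cr3 {R : realType} (u v w : point R) : R :=
  (v.1 - u.1) * (w.2 - u.2) - (v.2 - u.2) * (w.1 - u.1).

Lemma three_pts {R : realType} (a b e k : R) : a * e - b * b < 0 ->
  exists u v w : point R, [/\ Qf a b e u = k, Qf a b e v = k, Qf a b e w = k &
     cr3 u v w != 0].
Proof.
move=> /diag_form [t11 [t12 [t21 [t22 [l [ln0 dn0 hQ]]]]]].
set K := k / l.
have hK : l * K = k by rewrite /K; field.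
clearbody K.
pose T (U V : R) : point R := (t11 * U + t12 * V, t21 * U + t22 * V).
have [K1|K1] := eqVneq (K * K) 1.
  have Kn0 : K != 0 by apply/eqP => K0; move: K1; rewrite K0 mul0r => /eqP; rewrite eq_sym oner_eq0.
  exists (T 1 K), (T (-1) (-K)), (T 2 (K / 2)); split.
  - by rewrite hQ -hK; ring.
  - by rewrite hQ -hK; ring.
  - by rewrite hQ -hK; field.
  - rewrite /cr3 /T /=.
    have -> : (t11 * -1 + t12 * - K - (t11 * 1 + t12 * K)) *
      (t21 * 2 + t22 * (K / 2) - (t21 * 1 + t22 * K)) -
      (t21 * -1 + t22 * - K - (t21 * 1 + t22 * K)) *
      (t11 * 2 + t12 * (K / 2) - (t11 * 1 + t12 * K)) = (t11 * t22 - t12 * t21) * (3 * K).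
      by field.
    rewrite !mulf_neq0 //; apply/eqP; lra.
exists (T 1 K), (T K 1), (T (-1) (-K)); split.
- by rewrite hQ -hK; ring.
- by rewrite hQ -hK; ring.
- by rewrite hQ -hK; ring.
- rewrite /cr3 /T /=.
  have -> : (t11 * K + t12 * 1 - (t11 * 1 + t12 * K)) *
     (t21 * -1 + t22 * - K - (t21 * 1 + t22 * K)) -
     (t21 * K + t22 * 1 - (t21 * 1 + t22 * K)) *
     (t11 * -1 + t12 * - K - (t11 * 1 + t12 * K)) = (t11 * t22 - t12 * t21) * (2 * (1 - K * K)).
    by ring.
  rewrite !mulf_neq0 // ?subr_eq0 1?eq_sym //; apply/eqP; lra.
Qed.
Lemma hyp_ineq {R : realType} (a b c p q r : R) :
  a * c - b ^+ 2 = 1 -> p * r - q ^+ 2 = 1 -> 0 < a -> 0 < p ->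
  (a - p) * (c - r) - (b - q) ^+ 2 <= 0 /\
  ((a - p) * (c - r) - (b - q) ^+ 2 = 0 -> [/\ a = p, b = q & c = r]).
Proof.
move=> h1 h2 ha hp.
have E : a * p * ((a - p) * (c - r) - (b - q) ^+ 2) + ((a - p) ^+ 2 + (a * q - p * b) ^+ 2) =
   p * (a - p) * (a * c - b ^+ 2 - 1) + a * (p - a) * (p * r - q ^+ 2 - 1).
  ring.
rewrite h1 h2 !subrr !mulr0 addr0 in E.
move: E; set X := (a - p) * (c - r) - (b - q) ^+ 2; set s1 := (a - p) ^+ 2;
  set s2 := (a * q - p * b) ^+ 2 => E.
have hap : 0 < a * p by rewrite mulr_gt0.
have g1 : 0 <= s1 by rewrite sqr_ge0.
have g2 : 0 <= s2 by rewrite sqr_ge0.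
split.
  rewrite leNgt; apply/negP => hX.
  have : 0 < a * p * X by rewrite mulr_gt0.
  move: E; clearbody X s1 s2; set Y := a * p * X. move=> E; lra.
move=> hX0; rewrite hX0 mulr0 add0r in E.
have e1 : s1 = 0 by move: E g1 g2; clearbody s1 s2; lra.
have e2 : s2 = 0 by move: E g1 g2; clearbody s1 s2; lra.
move/eqP: e1; rewrite /s1 sqrf_eq0 subr_eq0 => /eqP eap.
move/eqP: e2; rewrite /s2 sqrf_eq0 subr_eq0 eap => /eqP e2.
have ebq : b = q by apply: (mulfI (lt0r_neq0 hp)); rewrite e2.
subst p q; split => //.
apply: (mulfI (lt0r_neq0 ha)).
have : a * c = a * r by move: h1 h2; set u := a * c; set w := a * r; lra.
by [].
Qed.
Lemma det2 (R : comRingType) (C : 'M[R]_2) : \det C = C 0 0 * C 1 1 - C 0 1 * C 1 0.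
Proof.
rewrite (expand_det_row _ 0) !big_ord_recr big_ord0 /= add0r.
rewrite /cofactor !det_mx11 /= !mxE /=.
rewrite !expr0 ?expr1 /=.
have e1 : widen_ord (m:=2) (leqnSn 1) ord_max = 0 by apply/val_inj.
have e2 : lift 0 (0 : 'I_1) = 1 :> 'I_2 by apply/val_inj.
have e3 : lift ord_max (0 : 'I_1) = 0 :> 'I_2 by apply/val_inj.
have e4 : (ord_max : 'I_2) = 1 by apply/val_inj.
rewrite e1 e2 e3 e4. ring.
Qed.

Lemma hyp_unpack {R : realType} (S : point R -> Prop) : hyperbola S ->
  exists a b e k (p : point R), a * e - b * b < 0 /\
    forall u : point R, S (p.1 + u.1, p.2 + u.2) <-> Qf a b e u = k.
Proof.
move=> [C [p [k [hCt hdet hS]]]].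
have hb : C 1 0 = C 0 1 by rewrite -[in LHS]hCt mxE.
exists (C 0 0), (C 0 1), (C 1 1), k, p; split.
  by move: hdet; rewrite det2 hb.
move=> u; rewrite hS.
have -> : psub (p.1 + u.1, p.2 + u.2) p = u.
  by case: u => u1 u2; rewrite /psub /=; congr pair; ring.
have -> : qform C u = Qf (C 0 0) (C 0 1) (C 1 1) u by rewrite /qform /Qf hb; ring.
by [].
Qed.

Lemma hyp_pts {R : realType} (S : point R -> Prop) : hyperbola S ->
  exists P Q T, [/\ S P, S Q, S T & cr3 P Q T != 0].
Proof.
move=> /hyp_unpack [a [b [e [k [p [hd hS]]]]]].
have [u [v [w [hu hv hw hc]]]] := @three_pts R a b e k hd.
exists (p.1 + u.1, p.2 + u.2), (p.1 + v.1, p.2 + v.2), (p.1 + w.1, p.2 + w.2); split.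
- by apply/hS.
- by apply/hS.
- by apply/hS.
- have -> : cr3 (p.1 + u.1, p.2 + u.2) (p.1 + v.1, p.2 + v.2) (p.1 + w.1, p.2 + w.2) = cr3 u v w.
    by rewrite /cr3 /=; ring.
  exact: hc.
Qed.

Lemma hyp_notall {R : realType} (S : point R -> Prop) : hyperbola S -> ~ (forall x, S x).
Proof.
move=> /hyp_unpack [a [b [e [k [p [hd hS]]]]]] hall.
have h0 := proj1 (hS (0, 0)) (hall _).
have h1 := proj1 (hS (1, 0)) (hall _).
have h2 := proj1 (hS (0, 1)) (hall _).
have h3 := proj1 (hS (1, 1)) (hall _).
move: h0 h1 h2 h3; rewrite /Qf /= => h0 h1 h2 h3.
have ea : a = 0 by move: h0 h1; set x := k; lra.
have ee : e = 0 by move: h0 h2; set x := k; lra.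
have eb : b = 0 by move: h0 h1 h2 h3; rewrite ea ee; lra.
by move: hd; rewrite ea ee eb; lra.
Qed.

Lemma hyp_not_inline {R : realType} (S : point R -> Prop) (u1 u2 c : R) :
  hyperbola S -> (u1 != 0 \/ u2 != 0) ->
  ~ (forall x, S x -> u1 * x.1 + u2 * x.2 = c).
Proof.
move=> /hyp_pts [P [Q [T [hP hQ hT hc]]]] hu hl.
have eP := hl _ hP; have eQ := hl _ hQ; have eT := hl _ hT.
move: hc; rewrite /cr3.
set a1 := Q.1 - P.1; set a2 := Q.2 - P.2; set c1 := T.1 - P.1; set c2 := T.2 - P.2.
have ha : u1 * a1 + u2 * a2 = 0.
  rewrite /a1 /a2 (_ : u1 * (Q.1 - P.1) + u2 * (Q.2 - P.2) = (u1 * Q.1 + u2 * Q.2) - (u1 * P.1 + u2 * P.2)); last by ring.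
  by rewrite eP eQ subrr.
have hc' : u1 * c1 + u2 * c2 = 0.
  rewrite /c1 /c2 (_ : u1 * (T.1 - P.1) + u2 * (T.2 - P.2) = (u1 * T.1 + u2 * T.2) - (u1 * P.1 + u2 * P.2)); last by ring.
  by rewrite eP eT subrr.
clearbody a1 a2 c1 c2 => hc.
have i1 : u1 * (a1 * c2 - a2 * c1) = c2 * (u1 * a1 + u2 * a2) - a2 * (u1 * c1 + u2 * c2) by ring.
have i2 : u2 * (a1 * c2 - a2 * c1) = a1 * (u1 * c1 + u2 * c2) - c1 * (u1 * a1 + u2 * a2) by ring.
rewrite ha hc' !mulr0 subrr in i1 i2.
case: hu => hu.
  by move/eqP: i1; rewrite mulf_eq0 (negbTE hu) (negbTE hc).
by move/eqP: i2; rewrite mulf_eq0 (negbTE hu) (negbTE hc).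
Qed.

Lemma hyp_not_linear {R : realType} (S : point R -> Prop) (u1 u2 c : R) :
  hyperbola S -> ~ (forall x, S x <-> u1 * x.1 + u2 * x.2 = c).
Proof.
move=> hS hl.
have [u0|un0] := eqVneq (u1, u2) (0, 0).
  case: u0 => -> -> in hl.
  have [c0|cn0] := eqVneq c 0.
    case: (hyp_notall _ hS) => x. apply/hl. rewrite c0. ring.
  have [P [_ [_ [hP _ _ _]]]] := hyp_pts _ hS.
  by move: (proj1 (hl P) hP); rewrite !mul0r addr0 => /esym/eqP; rewrite (negbTE cn0).
apply: (hyp_not_inline S u1 u2 c hS).
  case: (eqVneq u1 0) => [e1|]; last by left.
  by right; apply/eqP => e2; move: un0; rewrite e1 e2 eqxx.
by move=> x /hl.
Qed.

Lemma quad_hyp {R : realType} (S : point R -> Prop) (a11 a12 a22 b1 b2 g : R) :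
  a11 * a22 - a12 * a12 < 0 ->
  (forall m : point R, S m <-> a11 * m.1 ^+ 2 + 2 * a12 * m.1 * m.2 + a22 * m.2 ^+ 2
                                + 2 * b1 * m.1 + 2 * b2 * m.2 + g = 0) ->
  hyperbola S.
Proof.
move=> hd hS.
have dn0 : a11 * a22 - a12 * a12 != 0 by rewrite lt_eqF.
pose C : 'M[R]_2 := \matrix_(i < 2, j < 2) (if i == j then (if i == 0 then a11 else a22) else a12).
have c00 : C 0 0 = a11 by rewrite mxE.
have c01 : C 0 1 = a12 by rewrite mxE.
have c10 : C 1 0 = a12 by rewrite mxE.
have c11 : C 1 1 = a22 by rewrite mxE.
set p1 := - (a22 * b1 - a12 * b2) / (a11 * a22 - a12 * a12).
set p2 := - (a11 * b2 - a12 * b1) / (a11 * a22 - a12 * a12).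
exists C, (p1, p2), (Qf a11 a12 a22 (p1, p2) - g); split.
- apply/matrixP => i j; rewrite !mxE eq_sym.
  case: (eqVneq j i) => [->|] //.
- by rewrite det2 c00 c01 c10 c11.
- move=> m; rewrite hS /qform c00 c01 c10 c11 /psub /Qf /=.
  suff -> : (m.1 - p1) * (a11 * (m.1 - p1) + a12 * (m.2 - p2)) +
     (m.2 - p2) * (a12 * (m.1 - p1) + a22 * (m.2 - p2)) =
     a11 * m.1 ^+ 2 + 2 * a12 * m.1 * m.2 + a22 * m.2 ^+ 2 + 2 * b1 * m.1 + 2 * b2 * m.2 + g
     + (a11 * p1 ^+ 2 + 2 * a12 * p1 * p2 + a22 * p2 ^+ 2 - g).
    split => h; first by rewrite h add0r.
    by move/(canRL (addrK _)): h; rewrite subrr.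
  rewrite /p1 /p2; field; exact: dn0.
Qed.
Definition crs {R : realType} (d m : point R) : R := d.1 * m.2 - d.2 * m.1.
Definition dt {R : realType} (d m : point R) : R := d.1 * m.1 + d.2 * m.2.

Definition Npair {R : realType} (p1 d1 p3 d3 m : point R) : R :=
  let s := crs d1 (2 * m.1 - p1.1 - p3.1, 2 * m.2 - p1.2 - p3.2) / crs d1 d3 in
  (m.1 - p3.1 - s * d3.1) ^+ 2 + (m.2 - p3.2 - s * d3.2) ^+ 2.

Definition Kp {R : realType} (d1 d3 m : point R) : R :=
  dt d1 d3 / (crs d1 d3) ^+ 2 * (crs d1 m * crs d3 m).

Lemma Npair_expand {R : realType} (p1 d1 p3 d3 m : point R) :
  crs d1 d3 != 0 ->
  Npair p1 d1 p3 d3 m = m.1 ^+ 2 + m.2 ^+ 2 + 4 * Kp d1 d3 m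
   + 2 * (m.1 * ((Npair p1 d1 p3 d3 (1, 0) - Npair p1 d1 p3 d3 (-1, 0)) / 4)
          + m.2 * ((Npair p1 d1 p3 d3 (0, 1) - Npair p1 d1 p3 d3 (0, -1)) / 4))
   + Npair p1 d1 p3 d3 (0, 0).
Proof.
case: p1 => a1 b1; case: d1 => x1 y1; case: p3 => a3 b3; case: d3 => x3 y3; case: m => u v.
rewrite /Npair /Kp /crs /dt /= => hD.
field. exact: hD.
Qed.

Lemma pair_fwd {R : realType} (p1 d1 p3 d3 a c m : point R) :
  crs d1 d3 != 0 -> line p1 d1 a -> line p3 d3 c -> m = midpoint a c ->
  sqdist a c = 4 * Npair p1 d1 p3 d3 m.
Proof.
case: p1 => a1 b1; case: d1 => x1 y1; case: p3 => a3 b3; case: d3 => x3 y3.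
move=> hD [t ->] [s ->] ->.
rewrite /Npair /sqdist /midpoint /crs /= in hD *.
field. exact: hD.
Qed.

Lemma pair_bwd {R : realType} (p1 d1 p3 d3 m : point R) :
  crs d1 d3 != 0 -> exists a c, [/\ line p1 d1 a, line p3 d3 c, m = midpoint a c &
  sqdist a c = 4 * Npair p1 d1 p3 d3 m].
Proof.
case: p1 => a1 b1; case: d1 => x1 y1; case: p3 => a3 b3; case: d3 => x3 y3; case: m => u v.
rewrite /crs /= => hD.
set w1 := 2 * u - a1 - a3; set w2 := 2 * v - b1 - b3.
set t := (w1 * y3 - w2 * x3) / (x1 * y3 - y1 * x3).
set s := (x1 * w2 - y1 * w1) / (x1 * y3 - y1 * x3).
exists (a1 + t * x1, b1 + t * y1), (a3 + s * x3, b3 + s * y3).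
split; first by exists t.
- by exists s.
- rewrite /midpoint /=; congr (_, _); rewrite /t /s /w1 /w2; field; exact: hD.
- rewrite /sqdist /Npair /crs /= /t /s /w1 /w2; field; exact: hD.
Qed.

Lemma locus_iff {R : realType} (p1 d1 p3 d3 p2 d2 p4 d4 m : point R) :
  crs d1 d3 != 0 -> crs d2 d4 != 0 ->
  rect_locus (line p1 d1) (line p3 d3) (line p2 d2) (line p4 d4) m <->
  Npair p1 d1 p3 d3 m = Npair p2 d2 p4 d4 m.
Proof.
move=> h13 h24; split.
  move=> [a [c [b [d [[ha hc hb hd] [e1 e2 e3]]]]]].
  have E1 := @pair_fwd _ p1 d1 p3 d3 a c m h13 ha hc e1; have E2 := @pair_fwd _ p2 d2 p4 d4 b d m h24 hb hd e2.
  by move: e3; rewrite E1 E2 => /(mulfI _) ->; rewrite // pnatr_eq0.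
move=> hN.
have [a [c [ha hc e1 E1]]] := @pair_bwd _ p1 d1 p3 d3 m h13.
have [b [d [hb hd e2 E2]]] := @pair_bwd _ p2 d2 p4 d4 m h24.
exists a, c, b, d; split; split => //.
by rewrite E1 E2 hN.
Qed.

Lemma par_inline {R : realType} (p1 d1 p3 d3 a c m : point R) :
  crs d1 d3 = 0 -> line p1 d1 a -> line p3 d3 c -> m = midpoint a c ->
  (-2 * d1.2) * m.1 + (2 * d1.1) * m.2 = d1.1 * (p1.2 + p3.2) - d1.2 * (p1.1 + p3.1).
Proof.
case: p1 => a1 b1; case: d1 => x1 y1; case: p3 => a3 b3; case: d3 => x3 y3.
rewrite /crs /= => hD [t ->] [s ->] -> /=.
apply/eqP; rewrite -subr_eq0; apply/eqP.
rewrite (_ : _ - _ = s * (x1 * y3 - y1 * x3)); last by field.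
by rewrite hD mulr0.
Qed.

Lemma nz_norm {R : realType} (d : point R) : nonzero_vec d -> d.1 ^+ 2 + d.2 ^+ 2 != 0.
Proof.
move=> hd; rewrite gt_eqF //.
case: hd => h.
  by rewrite ltr_pwDl ?sqr_ge0 // exprn_even_gt0.
by rewrite ltr_pwDr ?sqr_ge0 // exprn_even_gt0.
Qed.

Definition g11 {R : realType} (d1 d3 : point R) : R := 1 + 4 * Kp d1 d3 (1, 0).
Definition g22 {R : realType} (d1 d3 : point R) : R := 1 + 4 * Kp d1 d3 (0, 1).
Definition g12 {R : realType} (d1 d3 : point R) : R :=
  2 * (Kp d1 d3 (1, 1) - Kp d1 d3 (1, 0) - Kp d1 d3 (0, 1)).

Lemma Kp_quad {R : realType} (d1 d3 m : point R) :
  4 * Kp d1 d3 m = (g11 d1 d3 - 1) * m.1 ^+ 2 + 2 * g12 d1 d3 * m.1 * m.2 + (g22 d1 d3 - 1) * m.2 ^+ 2.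
Proof.
rewrite /g11 /g12 /g22 /Kp /crs /=.
set k := dt d1 d3 / _.
ring.
Qed.

Lemma G_det {R : realType} (d1 d3 : point R) : crs d1 d3 != 0 ->
  g11 d1 d3 * g22 d1 d3 - g12 d1 d3 ^+ 2 = 1.
Proof.
case: d1 => x1 y1; case: d3 => x3 y3.
rewrite /g11 /g12 /g22 /Kp /crs /dt /= => hD.
field; exact: hD.
Qed.

Lemma G_pos {R : realType} (d1 d3 : point R) : crs d1 d3 != 0 -> 0 < g11 d1 d3.
Proof.
move=> hD.
have ge : 0 <= g11 d1 d3.
  move: hD; case: d1 => x1 y1; case: d3 => x3 y3 => hD.
  have -> : g11 (x1, y1) (x3, y3) = ((x1 * y3 + y1 * x3) ^+ 2 + 4 * (y1 * y3) ^+ 2) / (crs (x1, y1) (x3, y3)) ^+ 2.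
    move: hD; rewrite /g11 /Kp /crs /dt /= => hD; field; exact: hD.
  by rewrite divr_ge0 ?sqr_ge0 // addr_ge0 ?sqr_ge0 // mulr_ge0 ?sqr_ge0.
have hdet := G_det d1 d3 hD.
rewrite lt_def ge andbT; apply/eqP => h0.
by move: hdet; rewrite h0 mul0r sub0r => /eqP; rewrite -subr_eq0 -opprD oppr_eq0 gt_eqF // ltr_pwDr ?sqr_ge0.
Qed.

Definition ll1 {R : realType} (p1 d1 p3 d3 : point R) : R :=
  (Npair p1 d1 p3 d3 (1, 0) - Npair p1 d1 p3 d3 (-1, 0)) / 4.
Definition ll2 {R : realType} (p1 d1 p3 d3 : point R) : R :=
  (Npair p1 d1 p3 d3 (0, 1) - Npair p1 d1 p3 d3 (0, -1)) / 4.

Lemma N_form {R : realType} (p1 d1 p3 d3 m : point R) : crs d1 d3 != 0 ->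
  Npair p1 d1 p3 d3 m = g11 d1 d3 * m.1 ^+ 2 + 2 * g12 d1 d3 * m.1 * m.2 + g22 d1 d3 * m.2 ^+ 2
    + 2 * ll1 p1 d1 p3 d3 * m.1 + 2 * ll2 p1 d1 p3 d3 * m.2 + Npair p1 d1 p3 d3 (0, 0).
Proof.
move=> hD; rewrite (Npair_expand _ _ _ _ m hD) Kp_quad /ll1 /ll2.
set A := Npair _ _ _ _ _; set B := Npair _ _ _ _ (-1, 0); set C := Npair _ _ _ _ (0, 1);
 set D := Npair _ _ _ _ (0, -1); set E := Npair _ _ _ _ (0, 0).
ring.
Qed.

Lemma crs_trans {R : realType} (e a b : point R) : nonzero_vec e ->
  crs e a = 0 -> crs e b = 0 -> crs a b = 0.
Proof.
move=> he ha hb.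
have i1 : crs a b * e.1 = a.1 * crs e b - b.1 * crs e a by rewrite /crs; ring.
have i2 : crs a b * e.2 = a.2 * crs e b - b.2 * crs e a by rewrite /crs; ring.
rewrite ha hb !mulr0 subrr in i1 i2.
case: he => he.
  by move/eqP: i1; rewrite mulf_eq0 (negbTE he) orbF => /eqP.
by move/eqP: i2; rewrite mulf_eq0 (negbTE he) orbF => /eqP.
Qed.

Lemma Kp_sym {R : realType} (d1 d3 m : point R) : Kp d1 d3 m = Kp d3 d1 m.
Proof.
have e1 : dt d3 d1 = dt d1 d3 by rewrite /dt; ring.
have e2 : crs d3 d1 ^+ 2 = crs d1 d3 ^+ 2 by rewrite /crs; ring.
have e3 : crs d3 m * crs d1 m = crs d1 m * crs d3 m by ring.
by rewrite /Kp e1 e2 e3.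
Qed.

Lemma par_scale {R : realType} (d e : point R) : nonzero_vec d -> crs d e = 0 ->
  exists l, e = (l * d.1, l * d.2).
Proof.
move=> hd he; have hn := nz_norm d hd.
exists (dt d e / (d.1 ^+ 2 + d.2 ^+ 2)).
move: hn he; clear hd; case: d => x y; case: e => u v; rewrite /crs /dt /= => hn he.
congr pair.
  apply: (mulfI hn).
  rewrite (_ : (x ^+ 2 + y ^+ 2) * u = (x * u + y * v) * x - y * (x * v - y * u)); last by ring.
  by rewrite he mulr0 subr0; field.
apply: (mulfI hn).
rewrite (_ : (x ^+ 2 + y ^+ 2) * v = (x * u + y * v) * y + x * (x * v - y * u)); last by ring.
by rewrite he mulr0 addr0; field.
Qed.

Lemma Kp_match {R : realType} (d1 d3 d2 d4 m : point R) :
  nonzero_vec d1 -> nonzero_vec d3 -> nonzero_vec d2 -> nonzero_vec d4 ->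
  crs d1 d3 != 0 -> crs d1 d2 = 0 -> crs d3 d4 = 0 -> Kp d1 d3 m = Kp d2 d4 m.
Proof.
move=> n1 n3 n2 n4 hD h12 h34.
have [l el] := par_scale d1 d2 n1 h12.
have [k ek] := par_scale d3 d4 n3 h34.
have ln0 : l != 0.
  by apply/eqP => l0; move: n2; rewrite el l0 !mul0r /nonzero_vec /= eqxx; case.
have kn0 : k != 0.
  by apply/eqP => k0; move: n4; rewrite ek k0 !mul0r /nonzero_vec /= eqxx; case.
rewrite el ek; move: hD; rewrite /Kp /crs /dt /= => hD.
field; rewrite hD andbT.
rewrite (_ : _ - _ = l * k * (d1.1 * d3.2 - d1.2 * d3.1)); last by ring.
by rewrite !mulf_neq0.
Qed.

Lemma crs_anti {R : realType} (a b : point R) : crs a b = - crs b a.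
Proof. rewrite /crs; ring. Qed.

Lemma Phi0 {R : realType} (d1 d3 d2 d4 : point R) :
  nonzero_vec d1 -> nonzero_vec d3 -> nonzero_vec d2 -> nonzero_vec d4 ->
  crs d1 d3 != 0 -> crs d2 d4 != 0 -> (forall m, Kp d1 d3 m = Kp d2 d4 m) ->
  (dt d1 d3 = 0 /\ dt d2 d4 = 0) \/ (crs d1 d2 = 0 /\ crs d3 d4 = 0) \/
  (crs d1 d4 = 0 /\ crs d3 d2 = 0).
Proof.
move=> n1 n3 n2 n4 h13 h24 hK.
have [z24|nz24] := eqVneq (dt d2 d4) 0.
  left; split => //.
  have := hK (d1.1 + d3.1, d1.2 + d3.2).
  rewrite {2}/Kp z24 !mul0r.
  rewrite (_ : Kp d1 d3 _ = - dt d1 d3).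
    by move/eqP; rewrite oppr_eq0 => /eqP.
  move: h13; rewrite /Kp /crs /= => h13; field; exact: h13.
have kn : dt d2 d4 / crs d2 d4 ^+ 2 != 0 by rewrite mulf_neq0 // invr_neq0 // expf_neq0.
have k1 : Kp d2 d4 d1 = 0 by rewrite -hK /Kp (_ : crs d1 d1 = 0) ?mul0r ?mulr0 // /crs; ring.
have k3 : Kp d2 d4 d3 = 0 by rewrite -hK /Kp (_ : crs d3 d3 = 0) ?mul0r ?mulr0 // /crs; ring.
move/eqP: k1; rewrite /Kp mulf_eq0 (negbTE kn) /= mulf_eq0 => /orP [/eqP a1|/eqP a1];
move/eqP: k3; rewrite /Kp mulf_eq0 (negbTE kn) /= mulf_eq0 => /orP [/eqP a3|/eqP a3].
- by move: h13; rewrite (crs_trans _ _ _ n2 a1 a3) eqxx.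
- by right; left; rewrite crs_anti a1 oppr0 crs_anti a3 oppr0.
- by right; right; rewrite crs_anti a1 oppr0 crs_anti a3 oppr0.
- by move: h13; rewrite (crs_trans _ _ _ n4 a1 a3) eqxx.
Qed.

Lemma same_line {R : realType} (q d r e : point R) : nonzero_vec d -> nonzero_vec e ->
  crs d e = 0 -> crs e (q.1 - r.1, q.2 - r.2) = 0 -> same_set (line q d) (line r e).
Proof.
move=> nd ne hde hq.
have [l el] := par_scale d e nd hde.
have ln0 : l != 0.
  by apply/eqP => l0; move: ne; rewrite el l0 !mul0r /nonzero_vec /= eqxx; case.
have hq' : crs d (q.1 - r.1, q.2 - r.2) = 0.
  have : crs e (q.1 - r.1, q.2 - r.2) = l * crs d (q.1 - r.1, q.2 - r.2) by rewrite el /crs /=; ring.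
  by rewrite hq => /esym/eqP; rewrite mulf_eq0 (negbTE ln0) => /eqP.
have hn := nz_norm d nd.
set s0 := dt d (r.1 - q.1, r.2 - q.2) / (d.1 ^+ 2 + d.2 ^+ 2).
have hr : r = (q.1 + s0 * d.1, q.2 + s0 * d.2).
  rewrite /s0; clear -hq' hn; move: hq' hn.
  case: r => r1 r2; case: q => q1 q2; case: d => x y; rewrite /crs /dt /= => hq' hn.
  congr pair.
    apply: (mulfI hn).
    rewrite (_ : (x ^+ 2 + y ^+ 2) * r1 = (x ^+ 2 + y ^+ 2) * q1 + (x * (r1 - q1) + y * (r2 - q2)) * x + y * (x * (q2 - r2) - y * (q1 - r1))); last by ring.
    by rewrite hq' mulr0 addr0; field.
  apply: (mulfI hn).
  rewrite (_ : (x ^+ 2 + y ^+ 2) * r2 = (x ^+ 2 + y ^+ 2) * q2 + (x * (r1 - q1) + y * (r2 - q2)) * y - x * (x * (q2 - r2) - y * (q1 - r1))); last by ring.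
  by rewrite hq' mulr0 subr0; field.
move=> z; split.
  move=> [t ->]; exists ((t - s0) / l); rewrite hr el /=; congr pair; field; exact: ln0.
move=> [t ->]; exists (s0 + t * l); rewrite hr el /=; congr pair; ring.
Qed.

Lemma same_trans {R : realType} (A B C : point R -> Prop) :
  same_set A B -> same_set B C -> same_set A C.
Proof. by move=> h1 h2 x; split => h; [apply/h2/h1 | apply/h1/h2]. Qed.

Lemma translate_line {R : realType} (v q d : point R) :
  same_set (translate v (line q d)) (line (q.1 + v.1, q.2 + v.2) d).
Proof.
move=> x; rewrite /translate /psub; split => -[t ht]; exists t.
  move: ht; case: x => x1 x2 /= [h1 h2]; congr pair.
    by rewrite (_ : x1 = (x1 - v.1) + v.1); [rewrite h1; ring | ring].
  by rewrite (_ : x2 = (x2 - v.2) + v.2); [rewrite h2; ring | ring].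
by rewrite ht /=; congr pair; ring.
Qed.

Lemma trans_par {R : realType} (v p d q e : point R) :
  same_set (translate v (line p d)) (line q e) -> crs d e = 0.
Proof.
move=> h.
have h0 : line q e (p.1 + v.1, p.2 + v.2).
  apply/h; exists 0; rewrite /psub /=; congr pair; ring.
have h1 : line q e (p.1 + d.1 + v.1, p.2 + d.2 + v.2).
  apply/h; exists 1; rewrite /psub /=; congr pair; ring.
case: h0 => t0 [a1 a2]; case: h1 => t1 [b1 b2].
rewrite /crs.
have -> : d.1 = (t1 - t0) * e.1.
  by rewrite (_ : d.1 = (p.1 + d.1 + v.1) - (p.1 + v.1)); [rewrite b1 a1; ring | ring].
have -> : d.2 = (t1 - t0) * e.2.
  by rewrite (_ : d.2 = (p.2 + d.2 + v.2) - (p.2 + v.2)); [rewrite b2 a2; ring | ring].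
ring.
Qed.

Lemma match_trans {R : realType} (q1 f1 r1 e1 q2 f2 r2 e2 : point R) :
  nonzero_vec f1 -> nonzero_vec f2 -> nonzero_vec e1 -> nonzero_vec e2 ->
  crs e1 e2 != 0 -> crs f1 e1 = 0 -> crs f2 e2 = 0 ->
  exists v : point R, same_set (translate v (line q1 f1)) (line r1 e1) /\
            same_set (translate v (line q2 f2)) (line r2 e2).
Proof.
move=> nf1 nf2 ne1 ne2 hD h1 h2.
set c1 := crs e1 (r1.1 - q1.1, r1.2 - q1.2).
set c2 := crs e2 (r2.1 - q2.1, r2.2 - q2.2).
set v := ((c1 * e2.1 - e1.1 * c2) / crs e1 e2, (- e1.2 * c2 + e2.2 * c1) / crs e1 e2).
exists v; split.
  apply: (same_trans _ _ _ (translate_line v q1 f1)); apply: same_line => //.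
  move: hD; rewrite /v /c1 /crs /= => hD; field; exact: hD.
apply: (same_trans _ _ _ (translate_line v q2 f2)); apply: same_line => //.
move: hD; rewrite /v /c2 /crs /= => hD; field; exact: hD.
Qed.

Lemma eq_shift {R : realType} (x y u w : R) : x - y = u - w -> (x = y <-> u = w).
Proof.
move=> h; split => e.
  by apply/eqP; rewrite -subr_eq0 -h e subrr.
by apply/eqP; rewrite -subr_eq0 h e subrr.
Qed.

Lemma lin_contra {R : realType} (p1 d1 p3 d3 p2 d2 p4 d4 : point R) :
  crs d1 d3 != 0 -> crs d2 d4 != 0 -> (forall m, Kp d1 d3 m = Kp d2 d4 m) ->
  ~ hyperbola (rect_locus (line p1 d1) (line p3 d3) (line p2 d2) (line p4 d4)).
Proof.
move=> h13 h24 hK hH.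
have eg11 : g11 d1 d3 = g11 d2 d4 by rewrite /g11 hK.
have eg12 : g12 d1 d3 = g12 d2 d4 by rewrite /g12 !hK.
have eg22 : g22 d1 d3 = g22 d2 d4 by rewrite /g22 hK.
apply: (hyp_not_linear _ (2 * (ll1 p1 d1 p3 d3 - ll1 p2 d2 p4 d4))
   (2 * (ll2 p1 d1 p3 d3 - ll2 p2 d2 p4 d4))
   (Npair p2 d2 p4 d4 (0, 0) - Npair p1 d1 p3 d3 (0, 0)) hH) => m.
rewrite (locus_iff _ _ _ _ _ _ _ _ m h13 h24).
rewrite (N_form _ _ _ _ m h13) (N_form _ _ _ _ m h24) eg11 eg12 eg22.
apply: eq_shift; ring.
Qed.

Theorem theorem4p6 (R : realType) (p1 d1 p2 d2 p3 d3 p4 d4 : point R) :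
  nonzero_vec d1 -> nonzero_vec d2 -> nonzero_vec d3 -> nonzero_vec d4 ->
  (* each pair consists of two distinct lines *)
  ~ same_set (line p1 d1) (line p3 d3) ->
  ~ same_set (line p2 d2) (line p4 d4) ->
  (* the two pairs are distinct *)
  ~ same_pair (line p1 d1) (line p3 d3) (line p2 d2) (line p4 d4) ->
  hyperbola (rect_locus (line p1 d1) (line p3 d3) (line p2 d2) (line p4 d4))
  <->
  [/\ ~ parallel_dir d1 d3 /\ ~ parallel_dir d2 d4,
      ~ (orthogonal_dir d1 d3 /\ orthogonal_dir d2 d4) &
      ~ pair_translate (line p1 d1) (line p3 d3) (line p2 d2) (line p4 d4)].
Proof.
move=> n1 n2 n3 n4 _ _ _; split.
- move=> hH.
  have np13 : ~ parallel_dir d1 d3.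
    move=> hp; apply: (hyp_not_inline _ (-2 * d1.2) (2 * d1.1)
       (d1.1 * (p1.2 + p3.2) - d1.2 * (p1.1 + p3.1)) hH).
      case: n1 => h; [right | left]; rewrite mulf_neq0 //; apply/eqP; lra.
    move=> m [a [c [b [d [[ha hc _ _] [e1 _ _]]]]]].
    exact: (@par_inline _ p1 d1 p3 d3 a c m hp ha hc e1).
  have np24 : ~ parallel_dir d2 d4.
    move=> hp; apply: (hyp_not_inline _ (-2 * d2.2) (2 * d2.1)
       (d2.1 * (p2.2 + p4.2) - d2.2 * (p2.1 + p4.1)) hH).
      case: n2 => h; [right | left]; rewrite mulf_neq0 //; apply/eqP; lra.
    move=> m [a [c [b [d [[_ _ hb hd] [_ e2 _]]]]]].
    exact: (@par_inline _ p2 d2 p4 d4 b d m hp hb hd e2).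
  have h13 : crs d1 d3 != 0 by apply/eqP.
  have h24 : crs d2 d4 != 0 by apply/eqP.
  split.
  + by split.
  + move=> [o13 o24]; apply: (lin_contra _ _ _ _ _ _ _ _ h13 h24 _ hH) => m.
    have z13 : dt d1 d3 = 0 := o13.
    have z24 : dt d2 d4 = 0 := o24.
    by rewrite /Kp z13 z24 !mul0r.
  + move=> [v [[t1 t3]|[t1 t3]]].
      have a12 := trans_par _ _ _ _ _ t1; have a34 := trans_par _ _ _ _ _ t3.
      apply: (lin_contra _ _ _ _ _ _ _ _ h13 h24 _ hH) => m.
      exact: Kp_match.
    have a14 := trans_par _ _ _ _ _ t1; have a32 := trans_par _ _ _ _ _ t3.
    apply: (lin_contra _ _ _ _ _ _ _ _ h13 h24 _ hH) => m.
    by rewrite (Kp_match d1 d3 d4 d2 m n1 n3 n4 n2 h13 a14 a32) Kp_sym.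
- move=> [[np13 np24] nort ntr].
  have h13 : crs d1 d3 != 0 by apply/eqP.
  have h24 : crs d2 d4 != 0 by apply/eqP.
  apply: (quad_hyp _ (g11 d1 d3 - g11 d2 d4) (g12 d1 d3 - g12 d2 d4) (g22 d1 d3 - g22 d2 d4)
    (ll1 p1 d1 p3 d3 - ll1 p2 d2 p4 d4) (ll2 p1 d1 p3 d3 - ll2 p2 d2 p4 d4)
    (Npair p1 d1 p3 d3 (0, 0) - Npair p2 d2 p4 d4 (0, 0))).
    have [hle heq] := hyp_ineq _ _ _ _ _ _ (G_det _ _ h13) (G_det _ _ h24) (G_pos _ _ h13) (G_pos _ _ h24).
    rewrite -expr2 lt_def hle andbT; apply/eqP => h0.
    have [e11 e12 e22] := heq (esym h0).
    have hK : forall m, Kp d1 d3 m = Kp d2 d4 m.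
      move=> m; apply: (mulfI (_ : (4 : R) != 0)); first by apply/eqP; lra.
      by rewrite !Kp_quad e11 e12 e22.
    case: (Phi0 _ _ _ _ n1 n3 n2 n4 h13 h24 hK) => [[o13 o24]|[[c12 c34]|[c14 c32]]].
    * by apply: nort.
    * apply: ntr.
      have [v [s1 s2]] := match_trans p1 d1 p2 d2 p3 d3 p4 d4 n1 n3 n2 n4 h24 c12 c34.
      by exists v; left.
    * apply: ntr.
      have h42 : crs d4 d2 != 0 by rewrite crs_anti oppr_eq0.
      have [v [s1 s2]] := match_trans p1 d1 p4 d4 p3 d3 p2 d2 n1 n3 n4 n2 h42 c14 c32.
      by exists v; right.
  move=> m.
  rewrite (locus_iff _ _ _ _ _ _ _ _ m h13 h24).
  rewrite (N_form _ _ _ _ m h13) (N_form _ _ _ _ m h24).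
  apply: eq_shift; ring.
Qed.
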